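(* For every positive integer $n$, $$b^{2}_{3,4}(2n)\equiv b_{3,4}(n)\pmod 4.$$
   Context: For integers $r\ge1$ write $f_r=\prod_{j\ge1}(1-q^{rj})$. For coprime positive integers $\ell,m$ and a positive integer $k$, $b^{k}_{\ell,m}(n)$ denotes the number of $k$-colored partitions of $n$ into parts not divisible by $\ell$ or by $m$; equivalently $\sum_{n\ge0} b^{k}_{\ell,m}(n)q^n=\dfrac{f_\ell^k f_m^k}{f_1^k f_{\ell m}^k}$. Also $b_{\ell,m}(n)=b^{1}_{\ell,m}(n)$ is the number of (uncolored) partitions of $n$ into parts not divisible by $\ell$ or $m$, so $\sum_{n\ge0}b_{3,4}(n)q^n=\dfrac{f_3f_4}{f_1f_{12}}$ and $\sum_{n\ge0}b^2_{3,4}(n)q^n=\dfrac{f_3^2f_4^2}{f_1^2f_{12}^2}$. *)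

(* Defs.v *)
From mathcomp Require Import all_boot.
Set Implicit Arguments. Unset Strict Implicit. Unset Printing Implicit Defensive.

(* A k-colored partition of n is encoded by its multiplicity function:
   f (j, c) = number of parts of size j carrying colour c.
   Since every part is >= 1, parts and multiplicities are <= n, so the
   domain 'I_n.+1 * 'I_k and codomain 'I_n.+1 lose nothing. *)
Definition colored_partition_restricted (k l m n : nat)
    (f : {ffun 'I_n.+1 * 'I_k -> 'I_n.+1}) : bool :=
  [forall p : 'I_n.+1 * 'I_k,
     ((p.1 == 0 :> nat) || (l %| p.1) || (m %| p.1)) ==> (f p == 0 :> nat)]
  && (\sum_(p : 'I_n.+1 * 'I_k) p.1 * f p == n).

Definition bk (k l m n : nat) : nat :=
  #|[pred f : {ffun 'I_n.+1 * 'I_k -> 'I_n.+1} |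
        @colored_partition_restricted k l m n f]|.

Definition b (l m n : nat) : nat := bk 1 l m n.

(* Main.v *)
Require Import Defs.
From mathcomp Require Import all_boot all_algebra.
From mathcomp Require Import ring lra zify.
Set Implicit Arguments. Unset Strict Implicit. Unset Printing Implicit Defensive.
Import GRing.Theory.
Local Open Scope ring_scope.

Definition restr (i : nat) : bool := (i == 0)%N || (3 %| i)%N || (4 %| i)%N.

Definition Fp (N : nat) (i : 'I_N.+1) : {poly int} :=
  \sum_(j < N.+1) (if restr i then ((j : nat) == 0%N)%:R else 'X^(i * j)).

Lemma prod_term k N (f : {ffun 'I_N.+1 * 'I_k -> 'I_N.+1}) :
  \prod_(p : 'I_N.+1 * 'I_k)
     (if restr p.1 then ((f p : nat) == 0%N)%:R else 'X^(p.1 * f p) : {poly int})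
  = if [forall p : 'I_N.+1 * 'I_k, restr p.1 ==> ((f p : nat) == 0%N)]
    then 'X^(\sum_(p : 'I_N.+1 * 'I_k) p.1 * f p)%N else 0.
Proof.
case: ifP => [/forallP H|/negbT].
  rewrite -prodrXr; apply: eq_bigr => p _.
  case: ifP => // R; move: (H p); rewrite R /= => /eqP ->.
  by rewrite muln0 expr0.
rewrite negb_forall => /existsP [p]; rewrite negb_imply => /andP [R F].
rewrite (bigD1 p) //= R (negbTE F) mul0r //.
Qed.

Lemma bk_coef k N :
  ((bk k 3 4 N)%:R : int) = (\prod_(p : 'I_N.+1 * 'I_k) Fp p.1)`_N.
Proof.
rewrite /Fp.
rewrite (bigA_distr_bigA (fun (p : 'I_N.+1 * 'I_k) (j : 'I_N.+1) =>
   (if restr p.1 then ((j : nat) == 0%N)%:R else 'X^(p.1 * j) : {poly int}))).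
rewrite coef_sum.
under eq_bigr => f _ do rewrite prod_term.
rewrite /bk /colored_partition_restricted.
rewrite -sum1_card natr_sum big_mkcond /=.
apply: eq_bigr => f _.
rewrite inE.
rewrite (fun_if (fun p : {poly int} => p`_N)) coef0 coefXn.
case: [forall p : 'I_N.+1 * 'I_k, restr p.1 ==> ((f p : nat) == 0%N)] => //=.
by rewrite eq_sym; case: eqP.
Qed.

Definition Qf N : {poly int} := \prod_(i < N.+1) Fp i.

Lemma b_coef N : ((b 3 4 N)%:R : int) = (Qf N)`_N.
Proof.
rewrite /b bk_coef -(pair_bigA _ (fun i (j : 'I_1) => Fp i)) /=.
by rewrite /Qf; under eq_bigr => i _ do rewrite big_ord1.
Qed.

Lemma bk2_coef N : ((bk 2 3 4 N)%:R : int) = (Qf N ^+ 2)`_N.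
Proof.
rewrite bk_coef -(pair_bigA _ (fun i (j : 'I_2) => Fp i)) /=.
rewrite /Qf expr2 -big_split /=.
by under eq_bigr => i _ do rewrite big_ord_recr big_ord1.
Qed.

Definition xeq M (p q : {poly int}) := exists s, p - q = s * 'X^M.

Lemma xeq_refl M p : xeq M p p.
Proof. by exists 0; rewrite subrr mul0r. Qed.
Lemma xeq_sym M p q : xeq M p q -> xeq M q p.
Proof. by case=> s e; exists (- s); rewrite mulNr -e opprB. Qed.
Lemma xeq_trans M p q r : xeq M p q -> xeq M q r -> xeq M p r.
Proof.
case=> s e [t f]; exists (s + t).
by rewrite mulrDl -e -f; ring.
Qed.
Lemma xeq_mul M p q p' q' : xeq M p q -> xeq M p' q' -> xeq M (p * p') (q * q').
Proof.
case=> s e [t f]; exists (s * p' + q * t).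
have -> : p * p' - q * q' = (p - q) * p' + q * (p' - q') by ring.
by rewrite e f; ring.
Qed.

Lemma xeq_prod1 M (I : Type) (r : seq I) (P : pred I) (F : I -> {poly int}) :
  (forall i, P i -> xeq M (F i) 1) -> xeq M (\prod_(i <- r | P i) F i) 1.
Proof.
move=> H; apply: (big_ind (fun x => xeq M x 1)) => //.
- exact: xeq_refl.
- by move=> x y hx hy; have := xeq_mul hx hy; rewrite mulr1.
Qed.

Lemma xeq_1X M j : (M <= j)%N -> xeq M (1 - 'X^j) 1.
Proof.
move=> h; exists (- 'X^(j - M)).
by rewrite mulNr -exprD subnK // ; ring.
Qed.

Definition allowed (j : nat) : bool := ~~ restr j.
Definition wf (j : nat) : {poly int} := if allowed j then 1 - 'X^j else 1.

Lemma Fp_w N (i : 'I_N.+1) : xeq N.+1 (Fp i * wf i) 1.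
Proof.
rewrite /Fp /wf /allowed; case R: (restr i) => /=.
  rewrite mulr1 big_ord_recl /= big1 ?addr0; first exact: xeq_refl.
  by move=> j _.
have i0 : (0 < i)%N by move: R; rewrite /restr; case: (nat_of_ord i).
have -> : \sum_(j < N.+1) 'X^(i * j) = \sum_(j < N.+1) ('X^i : {poly int}) ^+ j.
  by apply: eq_bigr => j _; rewrite exprM.
have -> : (\sum_(j < N.+1) ('X^i : {poly int}) ^+ j) * (1 - 'X^i) = 1 - ('X^i) ^+ N.+1.
  by rewrite -[RHS]opprB subrX1; ring.
rewrite -exprM; apply: xeq_1X.
by rewrite -{1}(mul1n N.+1) leq_mul2r i0 orbT.
Qed.

Lemma QW N L : (N.+1 <= L)%N -> xeq N.+1 (Qf N * \prod_(0 <= j < L) wf j) 1.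
Proof.
move=> hL.
rewrite (big_cat_nat _ (n := N.+1)) //= big_mkord mulrA -big_split /=.
have H1 : xeq N.+1 (\prod_(i < N.+1) (Fp i * wf i)) 1.
  by apply: xeq_prod1 => i _; apply: Fp_w.
have H2 : xeq N.+1 (\prod_(N.+1 <= j < L) wf j) 1.
  rewrite big_nat_cond; apply: xeq_prod1 => j /andP [/andP [h _] _].
  rewrite /wf; case: ifP => _; [exact: xeq_1X | exact: xeq_refl].
by have := xeq_mul H1 H2; rewrite mulr1.
Qed.

Definition T (i : nat) : bool := ((i %% 2 == 1)%N && ~~ (3 %| i)%N).
Definition tD (i : nat) : {poly int} := if T i then 1 - 'X^i else 1.
Definition tP (i : nat) : {poly int} := if T i then 1 + 'X^i else 1.
Definition t2 (i : nat) : {poly int} := if T i then 1 - 'X^(2 * i) else 1.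

Definition Dm L := \prod_(0 <= i < L) tD i.
Definition Dp L := \prod_(0 <= i < L) tP i.
Definition D2 L := \prod_(0 <= i < L) t2 i.
Definition W L := \prod_(0 <= j < L) wf j.

Lemma prod_double (f : nat -> {poly int}) m :
  \prod_(0 <= j < 2 * m) f j = \prod_(0 <= i < m) (f (2 * i)%N * f (2 * i).+1).
Proof.
elim: m => [|m IH]; first by rewrite !big_geq.
rewrite mulnS big_nat_recr //= big_nat_recr //= IH -mulrA.
by rewrite [in RHS]big_nat_recr.
Qed.

Lemma wf_even i : wf (2 * i) = t2 i.
Proof.
rewrite /wf /t2; congr (if _ then _ else _).
by rewrite /allowed /restr /T; apply/idP/idP; lia.
Qed.

Lemma wf_odd i : wf (2 * i).+1 = tD (2 * i).+1.
Proof.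
rewrite /wf /tD; congr (if _ then _ else _).
by rewrite /allowed /restr /T; apply/idP/idP; lia.
Qed.

Lemma tD_even i : tD (2 * i) = 1.
Proof. by rewrite /tD /T; case: ifP => //; lia. Qed.

Lemma W_split m : xeq (2 * m) (W (2 * m)) (Dm (2 * m) * D2 (2 * m)).
Proof.
rewrite /W prod_double.
under eq_bigr => i _ do rewrite wf_even wf_odd.
rewrite big_split /=.
have -> : Dm (2 * m) = \prod_(0 <= i < m) tD (2 * i).+1.
  by rewrite /Dm prod_double; apply: eq_bigr => i _; rewrite tD_even mul1r.
have hm : (m <= 2 * m)%N by lia.
rewrite /D2 (big_cat_nat (leq0n m) hm) /=.
rewrite [X in xeq _ _ X]mulrCA.
have H : xeq (2 * m) 1 (\prod_(m <= i < 2 * m) t2 i).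
  apply: xeq_sym; rewrite big_nat_cond; apply: xeq_prod1 => i /andP [/andP [h _] _].
  rewrite /t2; case: ifP => _; last exact: xeq_refl.
  by apply: xeq_1X; lia.
have := xeq_mul (xeq_refl (2 * m) (\prod_(0 <= i < m) t2 i * \prod_(0 <= i < m) tD (2 * i).+1)) H.
by rewrite mulr1 !mulrA.
Qed.

Lemma DmDp L : Dm L * Dp L = D2 L.
Proof.
rewrite /Dm /Dp /D2 -big_split /=; apply: eq_bigr => i _.
rewrite /tD /tP /t2; case: ifP => _; last by rewrite mulr1.
by rewrite mul2n -addnn exprD; ring.
Qed.

Lemma Dm_comp L : Dm L = Dp L \Po (- 'X).
Proof.
rewrite /Dm /Dp (big_morph (fun p => p \Po (- 'X)) (fst (comp_poly_multiplicative _)) (snd (comp_poly_multiplicative _))).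
apply: eq_bigr => i _; rewrite /tD /tP; case: ifP => h.
  rewrite comp_polyD comp_Xn_poly comp_polyC exprNn.
  have : odd i by move: h; rewrite /T modn2; case: (odd i).
  by move=> o; rewrite -signr_odd o /= expr1 mulN1r.
by rewrite comp_polyC.
Qed.

Lemma D2_comp L : D2 L = Dm L \Po 'X^2.
Proof.
rewrite /Dm /D2 (big_morph (fun p => p \Po 'X^2) (fst (comp_poly_multiplicative _)) (snd (comp_poly_multiplicative _))).
apply: eq_bigr => i _; rewrite /tD /t2; case: ifP => h.
  by rewrite comp_polyB comp_Xn_poly comp_polyC -exprM.
by rewrite comp_polyC.
Qed.

Lemma sq_even (c : int) : exists k, c ^+ 2 - c = 2 * k.
Proof.
have hc := divz_eq c 2.
set a := (c %/ 2)%Z in hc *; set e := (c %% 2)%Z in hc *.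
have he : e * e = e.
  have h0 : (0 <= e)%R by apply: modz_ge0.
  have h1 : (e < 2)%R by rewrite /e ltz_pmod.
  have : (e == 0) || (e == 1) by lia.
  by case/orP => /eqP ->.
exists (2 * a * a + 2 * a * e - a).
rewrite hc; apply/eqP; rewrite -subr_eq0.
have -> : (a * 2 + e) ^+ 2 - (a * 2 + e) - 2 * (2 * a * a + 2 * a * e - a) = e * e - e by ring.
by rewrite he subrr.
Qed.

Lemma frob (p : {poly int}) : exists r, p ^+ 2 - (p \Po 'X^2) = 2 * r.
Proof.
elim/poly_ind: p => [|p c [r hr]].
  by exists 0; rewrite comp_poly0 expr0n /= subrr mulr0.
have [k hk] := sq_even c.
exists ('X^2 * r + c%:P * p * 'X + k%:P).
rewrite comp_polyD comp_polyM comp_polyX comp_polyC.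
have hc : c%:P ^+ 2 - c%:P = 2 * k%:P :> {poly int}.
  by rewrite -rmorphXn -rmorphB hk rmorphM /= polyC_natr.
have : (p * 'X + c%:P) ^+ 2 - ((p \Po 'X^2) * 'X^2 + c%:P)
   = 'X^2 * (p ^+ 2 - (p \Po 'X^2)) + 2 * c%:P * p * 'X + (c%:P ^+ 2 - c%:P) by ring.
by rewrite hr hc => ->; ring.
Qed.

Lemma even_comp (r : {poly int}) : even_poly (r \Po 'X^2) = r.
Proof.
apply/polyP => i; rewrite coef_even_poly coef_comp_poly_Xn //.
by rewrite -muln2 dvdn_mull // mulnK.
Qed.

Lemma odd_comp (r : {poly int}) : odd_poly (r \Po 'X^2) = 0.
Proof.
apply/polyP => i; rewrite coef_odd_poly coef_comp_poly_Xn // coef0.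
have -> : (2 %| i.*2.+1)%N = false by rewrite -muln2; lia.
by [].
Qed.

Lemma even_mulcomp (p r : {poly int}) :
  even_poly (p * (r \Po 'X^2)) = even_poly p * r.
Proof.
rewrite -{1}(poly_even_odd p).
have -> : (even_poly p \Po 'X^2 + (odd_poly p \Po 'X^2) * 'X) * (r \Po 'X^2)
   = (even_poly p * r) \Po 'X^2 + ((odd_poly p * r) \Po 'X^2) * 'X.
  by rewrite !comp_polyM; ring.
by rewrite even_polyD even_comp even_polyMX odd_comp mul0r addr0.
Qed.

Lemma key (Dm Dp D2 : {poly int}) :
  Dm = Dp \Po (- 'X) -> Dm * Dp = D2 -> D2 = Dm \Po 'X^2 ->
  (exists r, even_poly (Dp ^+ 2) - Dp = 4 * r) /\ (exists r, Dm ^+ 2 - Dp ^+ 2 = 4 * r).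
Proof.
move=> hc hm h2.
set A := even_poly Dp; set B := odd_poly Dp.
have hd : Dp = A \Po 'X^2 + (B \Po 'X^2) * 'X by rewrite poly_even_odd.
have cc : forall r : {poly int}, (r \Po 'X^2) \Po (- 'X) = r \Po 'X^2.
  by move=> r; rewrite -comp_polyA comp_Xn_poly sqrrN.
have hm' : Dm = A \Po 'X^2 - (B \Po 'X^2) * 'X.
  by rewrite hc {1}hd comp_polyD comp_polyM !cc comp_polyX; ring.
split; last first.
  exists (- ((A \Po 'X^2) * (B \Po 'X^2) * 'X)).
  by rewrite hm' hd; ring.
have hs : Dp ^+ 2 = (A ^+ 2 + 'X * B ^+ 2) \Po 'X^2
     + (((A * B) \Po 'X^2) * 'X + ((A * B) \Po 'X^2) * 'X).
  by rewrite hd !comp_polyD !comp_polyM comp_polyX; ring.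
have he : even_poly (Dp ^+ 2) = A ^+ 2 + 'X * B ^+ 2.
  by rewrite hs even_polyD even_comp even_polyD even_polyMX odd_comp mul0r addr0 addr0.
have hD : Dm = A ^+ 2 - 'X * B ^+ 2.
  have : D2 = (A ^+ 2 - 'X * B ^+ 2) \Po 'X^2.
    by rewrite -hm hm' hd comp_polyB !comp_polyM comp_polyX; ring.
  by rewrite h2 => /(congr1 (@even_poly _)); rewrite !even_comp.
have [s hsB] := frob B.
exists ('X * s).
have hdp : Dp = Dm + 2 * ((B \Po 'X^2) * 'X) by rewrite hm' hd; ring.
rewrite he hdp hD.
have -> : A ^+ 2 + 'X * B ^+ 2 - (A ^+ 2 - 'X * B ^+ 2 + 2 * ((B \Po 'X^2) * 'X))
  = 2 * 'X * (B ^+ 2 - (B \Po 'X^2)) by ring.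
by rewrite hsB; ring.
Qed.

Definition cg M (p q : {poly int}) := forall i, (i < M)%N -> (4 %| (p - q)`_i)%Z.

Lemma cg_refl M p : cg M p p.
Proof. by move=> i _; rewrite subrr coef0 dvdz0. Qed.
Arguments cg_refl M p : clear implicits.

Lemma cg_sym M p q : cg M p q -> cg M q p.
Proof. by move=> h i hi; rewrite -opprB coefN rpredN h. Qed.

Lemma cg_trans M p q r : cg M p q -> cg M q r -> cg M p r.
Proof.
move=> h1 h2 i hi.
have -> : p - r = (p - q) + (q - r) by ring.
by rewrite coefD rpredD ?h1 ?h2.
Qed.

Lemma dvd4_mul M (d r : {poly int}) :
  (forall i, (i < M)%N -> (4 %| d`_i)%Z) -> forall i, (i < M)%N -> (4 %| (d * r)`_i)%Z.
Proof.
move=> h i hi; rewrite coefM; apply: rpred_sum => j _.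
apply: dvdz_mulr; apply: h.
by apply: leq_ltn_trans hi; rewrite -ltnS.
Qed.

Lemma cg_mul M p q p' q' : cg M p q -> cg M p' q' -> cg M (p * p') (q * q').
Proof.
move=> h1 h2 i hi.
have -> : p * p' - q * q' = (p - q) * p' + (p' - q') * q by ring.
rewrite coefD; apply: rpredD; [exact: (@dvd4_mul M _ p' h1 i hi) | exact: (@dvd4_mul M _ q h2 i hi)].
Qed.

Lemma cg_pow M p q k : cg M p q -> cg M (p ^+ k) (q ^+ k).
Proof.
move=> h; elim: k => [|k IH]; first by rewrite !expr0; apply: cg_refl.
by rewrite !exprS; apply: cg_mul.
Qed.

Lemma xeq_cg M p q : xeq M p q -> cg M p q.
Proof. by case=> s e i hi; rewrite e coefMXn hi dvdz0. Qed.

Lemma m4_cg M p q : (exists r, p - q = 4 * r) -> cg M p q.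
Proof.
case=> r e i _; rewrite e mulr_natl coefMn.
by apply/dvdzP; exists r`_i; rewrite mulr_natr.
Qed.

Lemma cg_even M K p q : (K.*2 <= M.+1)%N -> cg M p q ->
  cg K (even_poly p) (even_poly q).
Proof.
move=> hK h i hi; rewrite coefB !coef_even_poly -coefB; apply: h.
by rewrite -!muln2 in hK *; lia.
Qed.

Lemma xeq_weaken M M' p q : (M' <= M)%N -> xeq M p q -> xeq M' p q.
Proof.
move=> h [s e]; exists (s * 'X^(M - M')).
by rewrite e -mulrA -exprD subnK.
Qed.

Lemma comp_pow (p q : {poly int}) k : (p ^+ k) \Po q = (p \Po q) ^+ k.
Proof.
elim: k => [|k IH]; first by rewrite !expr0 (snd (comp_poly_multiplicative _)).
by rewrite !exprS comp_polyM IH.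
Qed.

Lemma cg_eqL M p p' q : p = p' -> cg M p' q -> cg M p q.
Proof. by move=> ->. Qed.

Theorem main_cg n : cg n.+1 (even_poly (Qf (2 * n) ^+ 2)) (Qf n).
Proof.
set L := (2 * n.+1)%N.
set G := Qf (2 * n); set Q1 := Qf n.
set A := Dm L; set P := Dp L; set B := D2 L.
have hAP : A * P = B by apply: DmDp.
have hB : B = A \Po 'X^2 by apply: D2_comp.
have [[r1 k1] [r2 k2]] := key (Dm_comp L) hAP hB.
have hW : xeq L (W L) (A * B) by apply: W_split.
have H1 : cg (2 * n).+1 (G * (A * B)) 1.
  apply: xeq_cg; apply: xeq_trans (QW (N := (2 * n)) (L := L) _); last by rewrite /L; lia.
  apply: xeq_mul (xeq_refl _ _) _; apply: xeq_sym; apply: xeq_weaken hW.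
  by rewrite /L; lia.
have H2 : cg n.+1 (Q1 * (A * B)) 1.
  apply: xeq_cg; apply: xeq_trans (QW (N := n) (L := L) _); last by rewrite /L; lia.
  apply: xeq_mul (xeq_refl _ _) _; apply: xeq_sym; apply: xeq_weaken hW.
  by rewrite /L; lia.
have H3 : cg (2 * n).+1 (G ^+ 2 * B ^+ 4) (P ^+ 2).
  apply: (cg_eqL (p' := (G * (A * B)) ^+ 2 * P ^+ 2)).
    by rewrite -hAP; ring.
  have := cg_mul (cg_pow 2 H1) (cg_refl _ (P ^+ 2)).
  by rewrite expr1n mul1r.
have H4 : cg n.+1 (even_poly (G ^+ 2) * A ^+ 4) P.
  have := cg_even (K := n.+1) _ H3; rewrite hB -comp_pow even_mulcomp => h.
  apply: cg_trans (h _) _; first by rewrite -muln2; lia.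
  by apply: m4_cg; exists r1.
set E := even_poly (G ^+ 2) in H4 *.
have U4 := cg_pow 4 H2; rewrite expr1n in U4.
have U3 := cg_pow 3 H2; rewrite expr1n in U3.
have s1 : cg n.+1 E (E * (Q1 * (A * B)) ^+ 4).
  by have := cg_mul (cg_refl _ E) (cg_sym U4); rewrite mulr1.
apply: cg_trans s1 _.
apply: (cg_eqL (p' := (E * A ^+ 4) * (Q1 ^+ 4 * B ^+ 4))); first by ring.
apply: cg_trans (cg_mul H4 (cg_refl _ _)) _.
apply: (cg_eqL (p' := (Q1 ^+ 4 * A ^+ 4 * P ^+ 3) * P ^+ 2)); first by rewrite -hAP; ring.
have hm : cg n.+1 (P ^+ 2) (A ^+ 2) by apply: cg_sym; apply: m4_cg; exists r2.
apply: cg_trans (cg_mul (cg_refl _ _) hm) _.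
apply: (cg_eqL (p' := Q1 * (Q1 * (A * B)) ^+ 3)); first by rewrite -hAP; ring.
by have := cg_mul (cg_refl _ Q1) U3; rewrite mulr1.
Qed.

Local Close Scope ring_scope.

Theorem mainTheorem3 (n : nat) : 0 < n -> bk 2 3 4 (2 * n) = b 3 4 n %[mod 4].
Proof.
move=> _.
have := @main_cg n n (ltnSn n); rewrite coefB coef_even_poly -mul2n.
rewrite -bk2_coef -b_coef !natz -eqz_mod_dvd !modz_nat => /eqP [].
done.
Qed.
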